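(* Let $(V,\mathbf{1}^\vee,D,\mathcal{Y},\check S)$ be a braided multiplicative vertex coalgebra over a commutative ring $R$. Then: (1) (translation) $\mathcal{Y}(z)D(w)\equiv(\mathrm{id}\otimes D(w))\mathcal{Y}(zw)$; (2) (colocality) $(\check S(w/z)\otimes\mathrm{id})(\mathrm{id}\otimes\mathcal{Y}(w))\mathcal{Y}(z)\equiv(\mathrm{id}\otimes\mathcal{Y}(z))\mathcal{Y}(w)$.
   Context: A braided multiplicative vertex $R$-coalgebra consists of: an $R$-module $V$ with restricted dual $V^*$; a covacuum $\mathbf{1}^\vee\in V^*$; an $R$-linear translation operator $D(z)\colon V\to V[z^{\pm1}]$ with $D(z)D(w)=D(zw)$; a vertex coproduct $\mathcal{Y}(z)\colon V\to V\otimes V(\!(z^{-1})\!)$; and a braiding operator $\check S(z)\colon V\otimes V\to V\otimes V(\!(z^{-1})\!)$ which is unitary, $\check S(z^{-1})\check S(z)=\mathrm{id}$. Axioms: (covacuum) $(\mathbf{1}^\vee\otimes\mathrm{id})\mathcal{Y}(z)=\mathrm{id}$; $(\mathrm{id}\otimes\mathbf{1}^\vee)\mathcal{Y}(z)a\in V[z^{\pm1}]$ with $(\mathrm{id}\otimes\mathbf{1}^\vee)\mathcal{Y}(1)a=a$ for all $a\in V$; $(\mathbf{1}^\vee\otimes\mathrm{id})\check S(z)=\mathrm{id}\otimes\mathbf{1}^\vee$. (skew symmetry) $\check S(z^{-1})\mathcal{Y}(z)=\mathcal{Y}(z^{-1})D(z)$, the left side being well-defined. (weak coassociativity) $(\mathcal{Y}(z)\otimes\mathrm{id})\mathcal{Y}(w)\equiv(\mathrm{id}\otimes\mathcal{Y}(w))\mathcal{Y}(zw)$.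 (Yang–Baxter) $(\check S(z)\otimes\mathrm{id})(\mathrm{id}\otimes\check S(zw))(\check S(w)\otimes\mathrm{id})\equiv(\mathrm{id}\otimes\check S(w))(\check S(zw)\otimes\mathrm{id})(\mathrm{id}\otimes\check S(z))$ and $(\mathcal{Y}(z)\otimes\mathrm{id})\check S(w)\equiv(\mathrm{id}\otimes\check S(w))(\check S(zw)\otimes\mathrm{id})(\mathrm{id}\otimes\mathcal{Y}(z))$. Here, for operators with values in $V^{\otimes n}$ in formal variables $z,w$, $A\equiv B$ means that after applying any element of $(V^* )^{\otimes n}$ both sides belong to, and are equal in, $V^*[\![z^{-1},w^{-1}]\!][z,w]$ (as functionals of the input). *)

(* Defs.v *)
From mathcomp Require Import all_boot all_order all_algebra.
Set Implicit Arguments. Unset Strict Implicit. Unset Printing Implicit Defensive.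
Import Order.TTheory GRing.Theory Num.Theory.
Local Open Scope ring_scope.

Section BMVC.
Variables (R : comNzRingType) (V : lmodType R).

(* An element of V (x) V is represented by a finite formal sum of pure
   tensors  sum_i x_i (x) y_i  (a list of pairs); similarly for V^{(x)3}.
   Two representatives are equal in V (x) V iff every R-bilinear map into
   every R-module takes the same value on them (universal property). *)
Definition T2 := seq (V * V).
Definition T3 := seq (V * V * V).

Definition bilinear_map (M : lmodType R) (b : V -> V -> M) : Prop :=
  (forall c x x' y, b (c *: x + x') y = c *: b x y + b x' y) /\
  (forall c x y y', b x (c *: y + y') = c *: b x y + b x y').

Definition teq2 (t t' : T2) : Prop :=
  forall (M : lmodType R) (b : V -> V -> M), bilinear_map b ->
    \sum_(p <- t) b p.1 p.2 = \sum_(p <- t') b p.1 p.2.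

Definition tscale2 (c : R) (t : T2) : T2 := [seq (c *: p.1, p.2) | p <- t].

(* pairing of (Vdual)^{(x)2}, (Vdual)^{(x)3} (finite sums of pure tensors of
   functionals) with V^{(x)2}, V^{(x)3} *)
Definition pair2 (psi : seq ((V -> R) * (V -> R))) (t : T2) : R :=
  \sum_(f <- psi) \sum_(p <- t) f.1 p.1 * f.2 p.2.
Definition pair3 (psi : seq ((V -> R) * (V -> R) * (V -> R))) (t : T3) : R :=
  \sum_(f <- psi) \sum_(p <- t) f.1.1 p.1.1 * f.1.2 p.1.2 * f.2 p.2.

Definition sums (f : int -> R) (r : R) : Prop :=
  exists N : nat, (forall l : int, N%:Z < `|l| -> f l = 0) /\
    r = \sum_(i < N.*2.+1) f (i%:Z - N%:Z).

Definition tsums2 (f : int -> T2) (t : T2) : Prop :=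
  exists N : nat, (forall l : int, N%:Z < `|l| -> teq2 (f l) [::]) /\
    teq2 t (flatten [seq f (i%:Z - N%:Z) | i <- iota 0 N.*2.+1]).

Definition single (X : Type) (l : int) (x : seq X) : seq X :=
  if l == 0 then x else [::].

(* F m n l x (resp. G m n l x) is the l-th summand of the coefficient of
   z^m w^n of the (already paired) left (resp. right) hand side evaluated
   at the input x.  A === B: for all (m,n,x) these are summable, with the
   same sums c m n x; each coefficient functional c m n lies in the
   restricted dual Xd of the input space; and the degrees in z and in w
   are bounded above uniformly, i.e. the result lies in
   Xd[[z^-1,w^-1]][z,w]. *)
Definition formal_equiv (X : Type) (Xd : (X -> R) -> Prop)
    (F G : int -> int -> int -> X -> R) : Prop :=
  exists c : int -> int -> X -> R,
    (forall m n x, sums (fun l => F m n l x) (c m n x) /\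
                   sums (fun l => G m n l x) (c m n x)) /\
    (forall m n, Xd (c m n)) /\
    (exists N : int, forall m n x, (N < m \/ N < n) -> c m n x = 0).

Variable Vd : (V -> R) -> Prop.  (* the restricted dual Vdual inside Hom(V,R) *)

Definition dual2 (psi : seq ((V -> R) * (V -> R))) : Prop :=
  foldr (fun f P => (Vd f.1 /\ Vd f.2) /\ P) True psi.
Definition dual3 (psi : seq ((V -> R) * (V -> R) * (V -> R))) : Prop :=
  foldr (fun f P => [/\ Vd f.1.1, Vd f.1.2 & Vd f.2] /\ P) True psi.

Definition Vd2 (f : T2 -> R) : Prop :=
  exists psi, dual2 psi /\ forall t, f t = pair2 psi t.
Definition Vd3 (f : T3 -> R) : Prop :=
  exists psi, dual3 psi /\ forall t, f t = pair3 psi t.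

(* D k      = coefficient of z^k of D(z)            : V -> V
   Y k      = coefficient of z^k of Y(z)            : V -> V (x) V
   S k v u  = coefficient of z^k of S(z)(v (x) u)   : V (x) V -> V (x) V *)
Variables (one : V -> R) (D : int -> V -> V) (Y : int -> V -> T2)
          (S : int -> V -> V -> T2).

Definition Sx (k : int) (t : T2) : T2 := flatten [seq S k p.1 p.2 | p <- t].
Definition Yl (k : int) (t : T2) : T3 :=
  flatten [seq [seq (q.1, q.2, p.2) | q <- Y k p.1] | p <- t].
Definition Yr (k : int) (t : T2) : T3 :=
  flatten [seq [seq (p.1, q.1, q.2) | q <- Y k p.2] | p <- t].
Definition Sl (k : int) (t : T3) : T3 :=
  flatten [seq [seq (q.1, q.2, p.2) | q <- S k p.1.1 p.1.2] | p <- t].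
Definition Sr (k : int) (t : T3) : T3 :=
  flatten [seq [seq (p.1.1, q.1, q.2) | q <- S k p.1.2 p.2] | p <- t].
Definition Dr (k : int) (t : T2) : T2 := [seq (p.1, D k p.2) | p <- t].

Record is_bmvc : Prop := BMVC {
  dual_linear : forall f, Vd f -> forall (c : R) a b, f (c *: a + b) = c * f a + f b;
  dual_zero : Vd (fun _ => 0);
  dual_add : forall f g, Vd f -> Vd g -> Vd (fun a => f a + g a);
  dual_scale : forall (c : R) f, Vd f -> Vd (fun a => c * f a);
  covacuum_dual : Vd one;
  (* D(z) : V -> V[z^{+-1}] R-linear, D(z)D(w) = D(zw) *)
  D_linear : forall k (c : R) a b, D k (c *: a + b) = c *: D k a + D k b;
  D_finite : forall a, exists N : nat, forall k : int, N%:Z < `|k| -> D k a = 0;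
  D_mult : forall j k a, D j (D k a) = if j == k then D k a else 0;
  (* Y(z) : V -> (V (x) V)((z^-1)) R-linear *)
  Y_linear : forall k (c : R) a b,
    teq2 (Y k (c *: a + b)) (tscale2 c (Y k a) ++ Y k b);
  Y_trunc : forall a, exists N : int, forall k, N < k -> teq2 (Y k a) [::];
  (* S(z) : V (x) V -> (V (x) V)((z^-1)) R-linear *)
  S_linear_l : forall k (c : R) v v' u,
    teq2 (S k (c *: v + v') u) (tscale2 c (S k v u) ++ S k v' u);
  S_linear_r : forall k (c : R) v u u',
    teq2 (S k v (c *: u + u')) (tscale2 c (S k v u) ++ S k v u');
  S_trunc : forall v u, exists N : int, forall k, N < k -> teq2 (S k v u) [::];
  (* unitarity  S(z^-1) S(z) = id  (coefficient of z^n) *)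
  S_unitary : forall (t : T2) (n : int),
    tsums2 (fun l => Sx l (Sx (n + l) t)) (if n == 0 then t else [::]);
  covac_left : forall k a,
    \sum_(p <- Y k a) one p.1 *: p.2 = if k == 0 then a else 0;
  covac_right : forall a, exists N : nat,
    (forall k : int, N%:Z < `|k| -> \sum_(p <- Y k a) one p.2 *: p.1 = 0) /\
    \sum_(i < N.*2.+1) \sum_(p <- Y (i%:Z - N%:Z) a) one p.2 *: p.1 = a;
  covac_S : forall k v u,
    \sum_(p <- S k v u) one p.1 *: p.2 = if k == 0 then one u *: v else 0;
  (* skew symmetry  S(z^-1) Y(z) = Y(z^-1) D(z), left side well defined *)
  skew_symmetry : forall a (n : int), exists t : T2,
    tsums2 (fun l => Sx l (Y (n + l) a)) t /\
    tsums2 (fun j => Y (j - n) (D j a)) t;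
  (* weak coassociativity  (Y(z) (x) id) Y(w) === (id (x) Y(w)) Y(zw) *)
  weak_coassoc : forall psi, dual3 psi ->
    formal_equiv Vd
      (fun m n l a => pair3 psi (single l (Yl m (Y n a))))
      (fun m n l a => pair3 psi (single l (Yr (n - m) (Y m a))));
  (* Yang-Baxter
     (S(z)(x)id)(id(x)S(zw))(S(w)(x)id) === (id(x)S(w))(S(zw)(x)id)(id(x)S(z)) *)
  yang_baxter : forall psi, dual3 psi ->
    formal_equiv Vd3
      (fun m n j t => pair3 psi (Sl (m - j) (Sr j (Sl (n - j) t))))
      (fun m n j t => pair3 psi (Sr (n - j) (Sl j (Sr (m - j) t))));
  (* (Y(z)(x)id) S(w) === (id(x)S(w))(S(zw)(x)id)(id(x)Y(z)) *)
  yang_baxter_Y : forall psi, dual3 psi ->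
    formal_equiv Vd2
      (fun m n l t => pair3 psi (single l (Yl m (Sx n t))))
      (fun m n j t => pair3 psi (Sr (n - j) (Sl j (Yr (m - j) t))))
}.

(* (1) translation:  Y(z) D(w) === (id (x) D(w)) Y(zw) *)
Definition translation_law : Prop :=
  forall psi, dual2 psi ->
    formal_equiv Vd
      (fun m n l a => pair2 psi (single l (Y m (D n a))))
      (fun m n l a => pair2 psi (single l (Dr (n - m) (Y m a)))).

(* (2) colocality:
   (S(w/z) (x) id)(id (x) Y(w)) Y(z) === (id (x) Y(z)) Y(w) *)
Definition colocality_law : Prop :=
  forall psi, dual3 psi ->
    formal_equiv Vd
      (fun m n l a => pair3 psi (Sl l (Yr (n - l) (Y (m + l) a))))
      (fun m n l a => pair3 psi (single l (Yr m (Y n a)))).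

End BMVC.

(* Main.v *)
Require Import Defs.
From mathcomp Require Import all_boot all_order all_algebra.
From mathcomp Require Import zify.
From Stdlib Require Import FunctionalExtensionality.
Set Implicit Arguments. Unset Strict Implicit. Unset Printing Implicit Defensive.
Import Order.TTheory GRing.Theory Num.Theory.
Local Open Scope ring_scope.
Definition W (M : zmodType) (N : nat) (g : int -> M) : M :=
  \sum_(i < N.*2.+1) g (i%:Z - N%:Z).
Definition msums (M : zmodType) (g : int -> M) (r : M) : Prop :=
  exists N : nat, (forall l : int, N%:Z < `|l| -> g l = 0) /\ r = W N g.

Lemma W_S (M : zmodType) N (g : int -> M) :
  W N.+1 g = g (- (N.+1)%:Z) + W N g + g (N.+1)%:Z.
Proof.
rewrite /W doubleS big_ord_recl big_ord_recr /= -addrA; congr (_ + (_ + _)).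
- by congr g; lia.
- by apply: eq_bigr => i _; congr g; rewrite /bump /=; move: (nat_of_ord i) => k; lia.
- by congr g; rewrite /bump /=; lia.
Qed.

Lemma W_widen (M : zmodType) N k (g : int -> M) :
  (forall l : int, N%:Z < `|l| -> g l = 0) -> W (N + k) g = W N g.
Proof.
move=> Hg; elim: k => [|k IH]; first by rewrite addn0.
rewrite addnS W_S IH !Hg ?addr0 ?add0r //; lia.
Qed.

Lemma W_big0 (M : zmodType) N (g : int -> M) :
  (forall l : int, `|l| <= N%:Z -> g l = 0) -> W N g = 0.
Proof. move=> Hg; apply: big1 => i _; apply: Hg; have := ltn_ord i; lia. Qed.

Lemma W_single (M : zmodType) N (g : int -> M) j0 :
  (forall l, l != j0 -> g l = 0) -> `|j0| <= N%:Z -> W N g = g j0.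
Proof.
move=> Hg Hj; rewrite /W.
have Hi : (absz (j0 + N%:Z)%R < N.*2.+1)%N by lia.
rewrite (bigD1 (Ordinal Hi)) //= big1 ?addr0.
  by congr g; lia.
move=> i Hne; apply: Hg; apply/eqP => E; move/eqP: Hne; apply; apply/val_inj => /=.
lia.
Qed.

Lemma msums_single (M : zmodType) (g : int -> M) j0 r :
  (forall l, l != j0 -> g l = 0) -> msums g r -> r = g j0.
Proof.
move=> Hg [N [HN ->]].
case: (boolP (`|j0| <= N%:Z)) => Hj; first exact: W_single.
rewrite HN; last by lia.
apply: W_big0 => l Hl; apply: Hg; apply/eqP => E; subst; lia.
Qed.

Lemma msums_single_intro (M : zmodType) (g : int -> M) :
  (forall l, l != 0 -> g l = 0) -> msums g (g 0).
Proof.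
move=> Hg; exists 0%N; split; first by move=> l Hl; apply: Hg; lia.
by rewrite (@W_single _ 0 g 0).
Qed.

Lemma msums_W (M : zmodType) (g : int -> M) r N' :
  msums g r -> (forall l : int, N'%:Z < `|l| -> g l = 0) -> r = W N' g.
Proof.
move=> [N [HN ->]] HN'.
case: (leqP N N') => h.
  by rewrite -(subnKC h) W_widen.
by rewrite -(subnKC (ltnW h)) W_widen.
Qed.

Lemma msums_add (M : zmodType) (g1 g2 : int -> M) r1 r2 :
  msums g1 r1 -> msums g2 r2 -> msums (fun l => g1 l + g2 l) (r1 + r2).
Proof.
move=> h1 h2; have [N1 [H1 _]] := h1; have [N2 [H2 _]] := h2.
exists (maxn N1 N2); split.
  by move=> l Hl; rewrite H1 ?H2 ?addr0 //; lia.
rewrite (msums_W h1 (N' := maxn N1 N2)); last by move=> l Hl; apply: H1; lia.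
rewrite (msums_W h2 (N' := maxn N1 N2)); last by move=> l Hl; apply: H2; lia.
by rewrite /W -big_split.
Qed.

Lemma msums0 (M : zmodType) : msums (fun _ : int => (0 : M)) 0.
Proof. by exists 0%N; split => //; rewrite /W big1. Qed.

Lemma msums_ext (M : zmodType) (g g' : int -> M) r r' :
  g =1 g' -> r = r' -> msums g r -> msums g' r'.
Proof.
move=> E <- [N [HN ->]]; exists N; split.
  by move=> l Hl; rewrite -E HN.
by apply: eq_bigr => i _; rewrite E.
Qed.

Lemma msums_big (M : zmodType) (I : Type) (s : seq I) (G : I -> int -> M) r :
  (forall i, msums (G i) (r i)) ->
  msums (fun l => \sum_(i <- s) G i l) (\sum_(i <- s) r i).
Proof.
move=> HG; elim: s => [|i s IH].
  by apply: msums_ext (msums0 M) => [l|]; rewrite big_nil.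
apply: msums_ext (msums_add (HG i) IH) => [l|]; by rewrite big_cons.
Qed.

Lemma msums_mull (R : comNzRingType) (g : int -> R) r c :
  msums g r -> msums (fun l => c * g l) (c * r).
Proof.
move=> [N [HN ->]]; exists N; split.
  by move=> l Hl; rewrite HN ?mulr0.
by rewrite /W mulr_sumr.
Qed.
Lemma xx0 (M : zmodType) (x : M) : x = x + x -> x = 0.
Proof. by move=> h; apply: (addrI x); rewrite addr0 -h. Qed.

Section Main.
Variables (R : comNzRingType) (V : lmodType R) (Vd : (V -> R) -> Prop)
    (one : V -> R) (D : int -> V -> V) (Y : int -> V -> T2 V)
    (S : int -> V -> V -> T2 V).
Hypothesis H : is_bmvc Vd one D Y S.

Section Lin.
Variable f : V -> R.
Hypothesis hf : Vd f.
Lemma f0 : f 0 = 0.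
Proof. apply: xx0; by rewrite -{1}(addr0 0) -{1}(scale1r 0) (dual_linear H hf) mul1r. Qed.
Lemma fD a b : f (a + b) = f a + f b.
Proof. by rewrite -{1}(scale1r a) (dual_linear H hf) mul1r. Qed.
Lemma fZ c a : f (c *: a) = c * f a.
Proof. by rewrite -(addr0 (c *: a)) (dual_linear H hf) f0 addr0. Qed.
Lemma fsum (I : Type) (s : seq I) (F : I -> V) :
  f (\sum_(i <- s) F i) = \sum_(i <- s) f (F i).
Proof.
elim: s => [|i s IH]; first by rewrite !big_nil f0.
by rewrite !big_cons fD IH.
Qed.
End Lin.

Definition bs (M : lmodType R) (b : V -> V -> M) (t : T2 V) : M :=
  \sum_(p <- t) b p.1 p.2.
Definition pr (f g : V -> R) (t : T2 V) : R := \sum_(p <- t) f p.1 * g p.2.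

Lemma bilin_pr f g : Vd f -> Vd g ->
  bilinear_map (M := R^o) (fun x y => (f x * g y : R^o)).
Proof.
move=> hf hg; split => c x x' y /=.
  by rewrite (dual_linear H hf) mulrDl -mulrA.
by rewrite (dual_linear H hg) mulrDr mulrCA.
Qed.

Lemma teq2_pr f g t t' : Vd f -> Vd g -> teq2 t t' -> pr f g t = pr f g t'.
Proof. by move=> hf hg Ht; exact: (Ht _ _ (bilin_pr hf hg)). Qed.

Lemma bilin_V1 : bilinear_map (M := V) (fun x y => one x *: y).
Proof.
have ho := covacuum_dual H.
split => c x x' y /=.
  by rewrite (dual_linear H ho) scalerDl scalerA.
by rewrite scalerDr !scalerA mulrC.
Qed.

Lemma tsums2_msums (M : lmodType R) (b : V -> V -> M) f t :
  bilinear_map b -> tsums2 f t -> msums (fun l => bs b (f l)) (bs b t).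
Proof.
move=> hb [N [HN Ht]]; exists N; split.
  by move=> l Hl; have := HN l Hl M b hb; rewrite big_nil.
rewrite /bs (Ht M b hb) /W big_flatten big_map.
by rewrite -(big_mkord xpredT (fun i : nat => \sum_(p <- f (i%:Z - N%:Z)) b p.1 p.2)) /index_iota subn0.
Qed.

Lemma prY0 f g k : Vd f -> Vd g -> pr f g (Y k 0) = 0.
Proof.
move=> hf hg; apply: xx0.
have := Y_linear H k 1 0 0; rewrite scale1r addr0 => E.
rewrite {1}(teq2_pr hf hg E) /pr big_cat /= big_map.
by congr (_ + _); apply: eq_bigr => p _; rewrite fZ // mul1r.
Qed.

Lemma prYlin f g k (I : Type) (s : seq I) (c : I -> R) (x : I -> V) :
  Vd f -> Vd g ->
  pr f g (Y k (\sum_(i <- s) c i *: x i)) = \sum_(i <- s) c i * pr f g (Y k (x i)).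
Proof.
move=> hf hg; elim: s => [|i s IH]; first by rewrite !big_nil prY0.
rewrite !big_cons (teq2_pr hf hg (Y_linear H k _ _ _)) /pr big_cat /= big_map -IH.
congr (_ + _); rewrite mulr_sumr; apply: eq_bigr => p _; by rewrite fZ // mulrA.
Qed.


Lemma pair3_nil (psi : seq ((V -> R) * (V -> R) * (V -> R))) : pair3 psi [::] = 0 :> R.
Proof. by rewrite /pair3 big1 // => f _; rewrite big_nil. Qed.
Lemma pair2_nil (psi : seq ((V -> R) * (V -> R))) : pair2 psi [::] = 0 :> R.
Proof. by rewrite /pair2 big1 // => f _; rewrite big_nil. Qed.

Lemma single3 psi (t : T3 V) l : l != 0 -> pair3 psi (single l t) = 0.
Proof. by rewrite /single => /negbTE ->; rewrite pair3_nil. Qed.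
Lemma single2 psi (t : T2 V) l : l != 0 -> pair2 psi (single l t) = 0.
Proof. by rewrite /single => /negbTE ->; rewrite pair2_nil. Qed.

Lemma sums_single3 psi (t : T3 V) : sums (fun l => pair3 psi (single l t)) (pair3 psi t).
Proof.
apply: msums_ext (msums_single_intro (g := fun l => pair3 psi (single l t)) _) => //.
by move=> l; apply: single3.
Qed.
Lemma sums_single2 psi (t : T2 V) : sums (fun l => pair2 psi (single l t)) (pair2 psi t).
Proof.
apply: msums_ext (msums_single_intro (g := fun l => pair2 psi (single l t)) _) => //.
by move=> l; apply: single2.
Qed.

Lemma sums_single3_eq psi (t : T3 V) r : sums (fun l => pair3 psi (single l t)) r -> r = pair3 psi t.
Proof.
move=> h; rewrite (msums_single (j0 := 0) _ h) ?/single ?eqxx //.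
by move=> l; apply: single3.
Qed.

Lemma coassoc_full psi : dual3 Vd psi ->
  (forall m n a, pair3 psi (Yl Y m (Y n a)) = pair3 psi (Yr Y (n - m) (Y m a))) /\
  (exists N : int, forall m n a, (N < m \/ N < n) -> pair3 psi (Yl Y m (Y n a)) = 0) /\
  (forall m n, Vd (fun a => pair3 psi (Yl Y m (Y n a)))).
Proof.
move=> hpsi; have [c [hc [hVd [N hN]]]] := weak_coassoc H hpsi.
have E1 m n a : c m n a = pair3 psi (Yl Y m (Y n a)).
  by apply: sums_single3_eq; case: (hc m n a).
have E2 m n a : c m n a = pair3 psi (Yr Y (n - m) (Y m a)).
  by apply: sums_single3_eq; case: (hc m n a).
split; first by move=> m n a; rewrite -E1 -E2.
split; first by exists N => m n a h; rewrite -E1 hN.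
move=> m n; have -> : (fun a => pair3 psi (Yl Y m (Y n a))) = c m n.
  by apply: functional_extensionality => a; rewrite E1.
exact: hVd.
Qed.

Lemma pair3_Yl psi k t : pair3 psi (Yl Y k t) =
  \sum_(f <- psi) \sum_(p <- t) (\sum_(q <- Y k p.1) f.1.1 q.1 * f.1.2 q.2) * f.2 p.2.
Proof.
rewrite /pair3 /Yl; apply: eq_bigr => f _; rewrite big_flatten big_map.
by apply: eq_bigr => p _; rewrite big_map mulr_suml.
Qed.

Lemma pair3_Yr psi k t : pair3 psi (Yr Y k t) =
  \sum_(f <- psi) \sum_(p <- t) f.1.1 p.1 * (\sum_(q <- Y k p.2) f.1.2 q.1 * f.2 q.2).
Proof.
rewrite /pair3 /Yr; apply: eq_bigr => f _; rewrite big_flatten big_map.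
by apply: eq_bigr => p _; rewrite big_map mulr_sumr; apply: eq_bigr => q _; rewrite mulrA.
Qed.

Lemma pair3_Sl psi k t : pair3 psi (Sl S k t) =
  \sum_(f <- psi) \sum_(p <- t) (\sum_(q <- S k p.1.1 p.1.2) f.1.1 q.1 * f.1.2 q.2) * f.2 p.2.
Proof.
rewrite /pair3 /Sl; apply: eq_bigr => f _; rewrite big_flatten big_map.
by apply: eq_bigr => p _; rewrite big_map mulr_suml.
Qed.

Lemma covac_left_f f k x : Vd f ->
  \sum_(q <- Y k x) one q.1 * f q.2 = f (if k == 0 then x else 0).
Proof.
move=> hf; rewrite -(covac_left H) fsum //; apply: eq_bigr => q _; by rewrite fZ.
Qed.

Lemma D_fact n a : D n a = \sum_(p <- Y n a) one p.2 *: p.1.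
Proof.
have [t [h1 h2]] := skew_symmetry H a n.
have m1 := tsums2_msums bilin_V1 h1.
have m2 := tsums2_msums bilin_V1 h2.
have z1 : forall l, l != 0 -> bs (fun x y => one x *: y) (Sx S l (Y (n + l) a)) = 0.
  move=> l hl; rewrite /bs /Sx big_flatten big_map big1 // => p _.
  by rewrite (covac_S H) (negbTE hl).
have z2 : forall j, j != n -> bs (fun x y => one x *: y) (Y (j - n) (D j a)) = 0.
  move=> j hj; rewrite /bs (covac_left H); case: eqP => // E.
  by move/eqP: hj; case; apply/eqP; rewrite -subr_eq0 E.
have e1 := msums_single z1 m1.
have e2 := msums_single z2 m2.
rewrite e1 /bs /Sx big_flatten big_map addr0 in e2.
rewrite (covac_left H) subrr eqxx in e2.
rewrite -e2; apply: eq_bigr => p _; by rewrite (covac_S H) eqxx.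
Qed.

Lemma fD_fact f n a : Vd f -> f (D n a) = \sum_(p <- Y n a) f p.1 * one p.2.
Proof.
move=> hf; rewrite D_fact fsum //; apply: eq_bigr => p _; by rewrite fZ // mulrC.
Qed.

Lemma big_dual2 (psi : seq ((V -> R) * (V -> R))) (F G : (V -> R) * (V -> R) -> R) :
  dual2 Vd psi -> (forall f, Vd f.1 -> Vd f.2 -> F f = G f) ->
  \sum_(f <- psi) F f = \sum_(f <- psi) G f.
Proof.
move=> hpsi E; elim: psi hpsi => [|f psi IH] /=; first by rewrite !big_nil.
by move=> [[h1 h2] hp]; rewrite !big_cons E // IH.
Qed.

Lemma big_dual3 (psi : seq ((V -> R) * (V -> R) * (V -> R))) (F G : _ -> R) :
  dual3 Vd psi -> (forall f, Vd f.1.1 -> Vd f.1.2 -> Vd f.2 -> F f = G f) ->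
  \sum_(f <- psi) F f = \sum_(f <- psi) G f.
Proof.
move=> hpsi E; elim: psi hpsi => [|f psi IH] /=; first by rewrite !big_nil.
by move=> [[h1 h2 h3] hp]; rewrite !big_cons E // IH.
Qed.

Lemma VdD f n : Vd f -> Vd (fun a => f (D n a)).
Proof.
move=> hf.
have h3 : dual3 Vd [:: (one, f, one)].
  by split => //; split => //; apply: (covacuum_dual H).
have [_ [_ hV]] := coassoc_full h3.
have := hV 0 n.
have -> // : (fun a => pair3 [:: (one, f, one)] (Yl Y 0 (Y n a))) = (fun a => f (D n a)).
apply: functional_extensionality => a.
rewrite pair3_Yl big_seq1 fD_fact //=; apply: eq_bigr => p _.
by rewrite covac_left_f // eqxx.
Qed.

Lemma translation : translation_law Vd D Y.
Proof.
move=> psi hpsi.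
set psi3 := [seq (f.1, f.2, one) | f <- psi].
have h3 : dual3 Vd psi3.
  rewrite /psi3; clear psi3; elim: psi hpsi => [|f psi IH] //= [[h1 h2] hp].
  split; last exact: IH.
  by split => //; apply: (covacuum_dual H).
have [E [[N hN] hV]] := coassoc_full h3.
exists (fun m n a => pair3 psi3 (Yl Y m (Y n a))); split; [|split].
- move=> m n a; split.
  + apply: msums_ext (sums_single2 _ _) => //.
    rewrite pair3_Yl /psi3 big_map /pair2.
    apply: big_dual2 => // f hf1 hf2 /=.
    rewrite D_fact.
    have := prYlin m (Y n a) (fun p => one p.2) (fun p => p.1) hf1 hf2.
    rewrite /pr => ->; apply: eq_bigr => p _; by rewrite mulrC.
  + apply: msums_ext (sums_single2 _ _) => //.
    rewrite E pair3_Yr /psi3 big_map /pair2.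
    apply: big_dual2 => // f hf1 hf2 /=.
    rewrite /Dr big_map; apply: eq_bigr => p _ /=; by rewrite fD_fact.
- exact: hV.
- by exists N.
Qed.

Lemma pair3_cons f (psi : seq ((V -> R) * (V -> R) * (V -> R))) (t : T3 V) :
  pair3 (f :: psi) t = pair3 [:: f] t + pair3 psi t.
Proof. by rewrite /pair3 big_cons big_seq1. Qed.

Lemma Ybound f g : Vd f -> Vd g -> exists N : int, forall k u, N < k -> pr f g (Y k u) = 0.
Proof.
move=> hf hg.
have h3 : dual3 Vd [:: (one, f, g)].
  by split => //; split => //; apply: (covacuum_dual H).
have [_ [[N hN] _]] := coassoc_full h3.
exists N => k u hk; have := hN 0 k u (or_intror hk).
rewrite pair3_Yl big_seq1 /= => <-; apply: eq_bigr => p _.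
by rewrite covac_left_f // eqxx.
Qed.

Lemma YrBound psi : dual3 Vd psi ->
  exists N : int, forall k t, N < k -> pair3 psi (Yr Y k t) = 0.
Proof.
elim: psi => [|f psi IH] /=.
  by move=> _; exists 0 => k t _; rewrite /pair3 big_nil.
move=> [[h1 h2 h3] hp]; have [N1 hN1] := IH hp; have [N2 hN2] := Ybound h2 h3.
exists (Posz (absz N1 + absz N2)) => k t hk.
rewrite pair3_cons hN1; last by lia.
rewrite addr0 pair3_Yr big_seq1 big1 // => p _.
by have := hN2 k p.2; rewrite /pr => ->; [rewrite mulr0 | lia].
Qed.

Lemma F_fact f g k m u : Vd f -> Vd g ->
  \sum_(s <- Y k u) f (D m s.1) * g s.2 = if k == m then pr f g (Y m u) else 0.
Proof.
move=> hf hg.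
have h3 : dual3 Vd [:: (f, one, g)].
  by split => //; split => //; apply: (covacuum_dual H).
have [E _] := coassoc_full h3.
transitivity (pair3 [:: (f, one, g)] (Yl Y m (Y k u))).
  by rewrite pair3_Yl big_seq1; apply: eq_bigr => s _; rewrite fD_fact.
rewrite E pair3_Yr big_seq1 /=.
case: (eqVneq k m) => [->|hkm].
  by rewrite /pr; apply: eq_bigr => t _; rewrite covac_left_f // subrr eqxx.
rewrite big1 // => t _; rewrite covac_left_f //.
have -> : (k - m == 0) = false by rewrite subr_eq0 (negbTE hkm).
by rewrite f0 // mulr0.
Qed.

Lemma S_phi f1 f2 l : Vd f1 -> Vd f2 ->
  exists phi, dual2 Vd phi /\ forall x y, pr f1 f2 (S l x y) = pair2 phi [:: (x, y)].
Proof.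
move=> h1 h2.
have h3 : dual3 Vd [:: (one, f1, f2)].
  by split => //; split => //; apply: (covacuum_dual H).
have [c [hc [hV _]]] := yang_baxter_Y H h3.
have [phi [hphi Ephi]] := hV 0 l.
exists phi; split => // x y; rewrite -Ephi.
have [hc1 _] := hc 0 l [:: (x, y)].
rewrite (sums_single3_eq hc1) pair3_Yl big_seq1 /Sx /= cats0.
by apply: eq_bigr => p _; rewrite covac_left_f // eqxx.
Qed.

Lemma Sl_pair f l : Vd f.1.1 -> Vd f.1.2 -> Vd f.2 ->
  exists psi', dual3 Vd psi' /\ forall T, pair3 [:: f] (Sl S l T) = pair3 psi' T.
Proof.
move=> h1 h2 h3; have [phi [hphi Ephi]] := S_phi l h1 h2.
exists [seq (g.1, g.2, f.2) | g <- phi]; split.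
  elim: phi hphi {Ephi} => [|g phi IH] //= [[g1 g2] hp]; split; last exact: IH.
  by split.
move=> T; rewrite pair3_Sl big_seq1 /pair3 big_map exchange_big /=.
apply: eq_bigr => p _; have := Ephi p.1.1 p.1.2; rewrite /pr => ->.
rewrite /pair2 mulr_suml; apply: eq_bigr => g _; by rewrite big_seq1.
Qed.

Lemma tsums2_pr f g F t : Vd f -> Vd g -> tsums2 F t ->
  msums (fun l => pr f g (F l)) (pr f g t).
Proof. move=> hf hg h; exact: (tsums2_msums (bilin_pr hf hg) h). Qed.

Lemma hstep f1 f2 j m b : Vd f1 -> Vd f2 ->
  pr f1 f2 (Y (j - m) (D j b)) = pr f1 (fun x => f2 (D m x)) (Y (j - m) b).
Proof.
move=> h1 h2.
have h3 : dual3 Vd [:: (f1, f2, one)].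
  by split => //; split => //; apply: (covacuum_dual H).
have [E _] := coassoc_full h3.
rewrite D_fact prYlin //.
transitivity (pair3 [:: (f1, f2, one)] (Yl Y (j - m) (Y j b))).
  by rewrite pair3_Yl big_seq1; apply: eq_bigr => r _; rewrite mulrC.
rewrite E pair3_Yr big_seq1 /=.
have -> : j - (j - m) = m by lia.
by rewrite /pr; apply: eq_bigr => r _; rewrite fD_fact.
Qed.

Lemma K_fact f1 f2 f3 m n a j : Vd f1 -> Vd f2 -> Vd f3 ->
  \sum_(p <- Y (n + m) a) f3 p.2 * pr f1 f2 (Y (j - m) (D j p.1)) =
  if j == n + m then pair3 [:: (f1, f2, f3)] (Yr Y m (Y n a)) else 0.
Proof.
move=> h1 h2 h3.
have hD := VdD m h2.
have h3' : dual3 Vd [:: (f1, (fun x => f2 (D m x)), f3)] by [].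
have [E _] := coassoc_full h3'.
transitivity (pair3 [:: (f1, (fun x => f2 (D m x)), f3)] (Yl Y (j - m) (Y (n + m) a))).
  rewrite pair3_Yl big_seq1; apply: eq_bigr => p _; by rewrite hstep // mulrC.
rewrite E pair3_Yr big_seq1 /=.
under eq_bigr => r _ do rewrite (F_fact _ _ _ h2 h3).
have -> : (n + m - (j - m) == m) = (j == n + m).
  by apply/idP/idP => /eqP e; apply/eqP; lia.
case: eqP => [->|_]; last by rewrite big1 // => r _; rewrite mulr0.
have -> : n + m - m = n by lia.
by rewrite pair3_Yr big_seq1.
Qed.

Lemma Fmain f1 f2 f3 m n a : Vd f1 -> Vd f2 -> Vd f3 ->
  msums (fun l => pair3 [:: (f1, f2, f3)] (Sl S l (Yr Y (n - l) (Y (m + l) a))))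
        (pair3 [:: (f1, f2, f3)] (Yr Y m (Y n a))).
Proof.
move=> h1 h2 h3.
have step1 l : pair3 [:: (f1, f2, f3)] (Sl S l (Yr Y (n - l) (Y (m + l) a))) =
    \sum_(p <- Y (n + m) a) f3 p.2 * pr f1 f2 (Sx S l (Y (m + l) p.1)).
  have [psi' [hp' Ep']] := Sl_pair (f := (f1, f2, f3)) l h1 h2 h3.
  rewrite Ep'; have [E _] := coassoc_full hp'.
  rewrite (_ : n - l = (n + m) - (m + l)); last by lia.
  rewrite -E -Ep' pair3_Sl big_seq1 /Yl big_flatten big_map.
  apply: eq_bigr => p _; rewrite big_map /pr /Sx big_flatten big_map mulr_sumr.
  by apply: eq_bigr => q _ /=; rewrite mulrC.
have [v [hv1 hv2]] : exists v,
    msums (fun l => \sum_(p <- Y (n + m) a) f3 p.2 * pr f1 f2 (Sx S l (Y (m + l) p.1))) v /\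
    msums (fun j => \sum_(p <- Y (n + m) a) f3 p.2 * pr f1 f2 (Y (j - m) (D j p.1))) v.
  elim: (Y (n + m) a) => [|p t [v [e1 e2]]].
    by exists 0; split; apply: msums_ext (msums0 _) => // l; rewrite big_nil.
  have [tp [s1 s2]] := skew_symmetry H p.1 m.
  have m1 := tsums2_pr h1 h2 s1; have m2 := tsums2_pr h1 h2 s2.
  exists (f3 p.2 * pr f1 f2 tp + v); split.
    by apply: msums_ext (msums_add (msums_mull (f3 p.2) m1) e1) => // l; rewrite big_cons.
  by apply: msums_ext (msums_add (msums_mull (f3 p.2) m2) e2) => // l; rewrite big_cons.
have e := msums_single (j0 := n + m) _ hv2.
rewrite K_fact // eqxx in e.
apply: msums_ext hv1 => [l|]; first by rewrite step1.
apply: e => j hj; by rewrite K_fact // (negbTE hj).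
Qed.

Lemma colocality : colocality_law Vd Y S.
Proof.
move=> psi hpsi.
have [E [[N0 hN0] hV]] := coassoc_full hpsi.
have [N1 hN1] := YrBound hpsi.
exists (fun m n a => pair3 psi (Yr Y m (Y n a))); split; [|split].
- move=> m n a; split; last exact: sums_single3.
  clear E hN0 hV hN1.
  elim: psi hpsi => [|f psi IH] /=.
    by move=> _; apply: msums_ext (msums0 _) => [l|]; rewrite /pair3 big_nil.
  case: f => [[f1 f2] f3] /= [[h1 h2 h3] hp].
  apply: msums_ext (msums_add (Fmain m n a h1 h2 h3) (IH hp)); [move=> l; by rewrite (pair3_cons _ psi) | by rewrite (pair3_cons _ psi)].
- move=> m n.
  have -> : (fun a => pair3 psi (Yr Y m (Y n a))) = (fun a => pair3 psi (Yl Y n (Y (m + n) a))).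
    by apply: functional_extensionality => a; rewrite E addrK.
  exact: hV.
- exists (Posz (absz N0 + absz N1)) => m n a [hm|hn].
    by apply: hN1; lia.
  rewrite (_ : pair3 psi (Yr Y m (Y n a)) = pair3 psi (Yl Y n (Y (m + n) a))).
    by apply: hN0; left; lia.
  by rewrite E addrK.
Qed.

End Main.

Unset Implicit Arguments.
Theorem lemma3p1p5 (R : comNzRingType) (V : lmodType R) (Vd : (V -> R) -> Prop)
    (one : V -> R) (D : int -> V -> V) (Y : int -> V -> T2 V)
    (S : int -> V -> V -> T2 V)
    (H : is_bmvc Vd one D Y S) :
  translation_law Vd D Y /\ colocality_law Vd Y S.
Proof. split; [exact: translation H | exact: colocality H]. Qed.
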